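(* Let $l\in\mathbb{N}$ and, for $\alpha\in\mathcal{E}$, put $\Phi(\alpha)=\omega^3\cdot\alpha+\omega^3+l+2$. Let $E(x)=2^{2^{2^x}}$. Suppose $X=\{x_0<\dots<x_{|X|-1}\}$ is a finite set of natural numbers, all greater than $2$, which is $\Phi(\gamma_0)$-large. Suppose $\gamma_0>\gamma_1>\dots>\gamma_j$ are in $\mathcal{E}$ and $\mathrm{MC}(\gamma_i)\leq E(x_i+l)$ holds for every $i\leq j$ for which $x_i$ is defined (i.e. $i\leq|X|-1$). Then $j\leq|X|-1$.
   Context: $\mathcal{E}$ is the set of ordinal notations below $\varepsilon_0$: formal sums $\omega^{\alpha_0}+\dots+\omega^{\alpha_n}$ with $\alpha_0\geq\dots\geq\alpha_n\in\mathcal{E}$ (the empty sum is $0$). The order is lexicographic: $\omega^{\alpha_0}+\dots+\omega^{\alpha_n}<\omega^{\beta_0}+\dots+\omega^{\beta_m}$ iff either $n<m$ and $\alpha_i=\beta_i$ for all $i\leq n$, or there is $i\leq\min\{n,m\}$ with $\alpha_j=\beta_j$ for $j<i$ and $\alpha_i<\beta_i$. Here $1=\omega^0$, $k=1+\dots+1$, $\omega=\omega^1$; $+$ and $\cdot$ are the usual ordinal addition and multiplication on notations. Every $\alpha$ has a Cantor normal form $\omega^{\alpha_0}a_0+\dots+\omega^{\alpha_n}a_n$ with $\alpha_0>\dots>\alpha_n$ and positive integers $a_i$. The maximal coefficient is $\mathrm{MC}(0)=0$ and $\mathrm{MC}(\alpha)=\max_i\{a_i,\mathrm{MC}(\alpha_i)\}$.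 Fundamental sequences, for $\alpha=\omega^{\alpha_0}+\dots+\omega^{\alpha_n}$ and $x\in\mathbb{N}$: $0[x]=0$. If $\alpha_n=0$ then $\alpha[x]=\omega^{\alpha_0}+\dots+\omega^{\alpha_{n-1}}$. If $\alpha_n=\beta+1$ then $\alpha[x]=\omega^{\alpha_0}+\dots+\omega^{\alpha_{n-1}}+\omega^\beta\cdot x$. If $\alpha_n$ is a nonzero non-successor then $\alpha[x]=\omega^{\alpha_0}+\dots+\omega^{\alpha_{n-1}}+\omega^{\alpha_n[x]}$. A finite set $X=\{x_0<\dots<x_{|X|-1}\}$ is $\alpha$-large if $\alpha[x_0][x_1]\cdots[x_{|X|-1}]=0$. *)

(* Defs.v *)
From HB Require Import structures.
From mathcomp Require Import all_boot.
Set Implicit Arguments. Unset Strict Implicit. Unset Printing Implicit Defensive.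

(* Ordinal notations below epsilon_0: [ocons a b] denotes omega^a + b. *)
Inductive ord : Type := ozero | ocons (a b : ord).

Fixpoint ocmp (x y : ord) : comparison :=
  match x, y with
  | ozero, ozero => Eq
  | ozero, ocons _ _ => Lt
  | ocons _ _, ozero => Gt
  | ocons a b, ocons c d =>
      match ocmp a c with Eq => ocmp b d | r => r end
  end.

Definition olt (x y : ord) : bool := if ocmp x y is Lt then true else false.
Definition oeq (x y : ord) : bool := if ocmp x y is Eq then true else false.

(* Membership in E: exponents weakly decreasing, recursively. *)
Fixpoint is_nf (x : ord) : bool :=
  match x with
  | ozero => true
  | ocons a b =>
      is_nf a && is_nf b &&
      (match b with ozero => true | ocons c _ => ~~ olt a c end)
  end.

Fixpoint oadd (x y : ord) : ord :=
  match x with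
  | ozero => y
  | ocons a b =>
      match y with
      | ozero => x
      | ocons c _ => if olt a c then y else ocons a (oadd b y)
      end
  end.

(* x * omega^b *)
Definition omul_w (x b : ord) : ord :=
  match x with
  | ozero => ozero
  | ocons a _ => match b with ozero => x | _ => ocons (oadd a b) ozero end
  end.

Fixpoint omul (x y : ord) : ord :=
  match y with
  | ozero => ozero
  | ocons b d => oadd (omul_w x b) (omul x d)
  end.

Fixpoint onat (k : nat) : ord :=
  match k with 0 => ozero | k'.+1 => ocons ozero (onat k') end.

Definition oomega : ord := ocons (onat 1) ozero.
Definition oomega3 : ord := ocons (onat 3) ozero.

Fixpoint ord_eqb (x y : ord) : bool :=
  match x, y with
  | ozero, ozero => true
  | ocons a b, ocons c d => ord_eqb a c && ord_eqb b d
  | _, _ => false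
  end.
Lemma ord_eqbP : Equality.axiom ord_eqb.
Proof.
elim=> [|a IHa b IHb] [|c d] /=; try by constructor.
by case: IHa => [->|H]; [case: IHb => [->|H]|]; constructor; congruence.
Qed.
HB.instance Definition _ := hasDecEq.Build ord ord_eqbP.

(* Maximal coefficient: the coefficient of the leading exponent a of
   omega^a + b is 1 + the number of leading summands of b with exponent a. *)
Fixpoint lead_count (a b : ord) : nat :=
  match b with
  | ozero => 0
  | ocons c d => if oeq a c then (lead_count a d).+1 else 0
  end.

Fixpoint MC (x : ord) : nat :=
  match x with
  | ozero => 0
  | ocons a b => maxn (lead_count a b).+1 (maxn (MC a) (MC b))
  end.

Fixpoint omega_times (b : ord) (x : nat) : ord :=
  match x with 0 => ozero | n.+1 => ocons b (omega_times b n) end.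

(* last exponent is 0, i.e. the ordinal is a successor *)
Fixpoint last_is_zero (a : ord) : bool :=
  match a with
  | ozero => false
  | ocons e b =>
      match b with
      | ozero => if e is ozero then true else false
      | _ => last_is_zero b
      end
  end.

Fixpoint drop_last (a : ord) : ord :=
  match a with
  | ozero => ozero
  | ocons e b => match b with ozero => ozero | _ => ocons e (drop_last b) end
  end.

Fixpoint fs (alpha : ord) (x : nat) : ord :=
  match alpha with
  | ozero => ozero
  | ocons a b =>
      match b with
      | ozero =>
          match a with
          | ozero => ozero
          | _ => if last_is_zero a then omega_times (drop_last a) x
                 else ocons (fs a x) ozero
          end
      | _ => ocons a (fs b x)
      end
  end.

(* X (listed increasingly) is alpha-large iff alpha[x_0]...[x_{|X|-1}] = 0 *)
Definition large (alpha : ord) (X : seq nat) : bool :=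
  foldl fs alpha X == ozero.

Definition Phi (l : nat) (alpha : ord) : ord :=
  oadd (oadd (oadd (omul oomega3 alpha) oomega3) (onat l)) (onat 2).

Definition Etow (x : nat) : nat := 2 ^ (2 ^ (2 ^ x)).

(* Main.v *)
Require Import Defs.
From mathcomp Require Import all_boot.
From mathcomp Require Import zify.
Set Implicit Arguments. Unset Strict Implicit.

Lemma ocmp_refl x : ocmp x x = Eq.
Proof. by elim: x => //= a -> b ->. Qed.

Lemma ocmp_eq x y : ocmp x y = Eq -> x = y.
Proof.
elim: x y => [|a IHa b IHb] [|c d] //=.
by case E: (ocmp a c) => // /IHb ->; rewrite (IHa _ E).
Qed.

Lemma ocmp_sym x y : ocmp y x = CompOpp (ocmp x y).
Proof.
elim: x y => [|a IHa b IHb] [|c d] //=.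
rewrite IHa; case: (ocmp a c) => //=.
Qed.

Lemma ocmp_trans x y z : ocmp x y = Lt -> ocmp y z = Lt -> ocmp x z = Lt.
Proof.
elim: x y z => [|a IHa b IHb] [|c d] [|e f] //=.
case E1: (ocmp a c) => //; case E2: (ocmp c e) => //.
- have H1 := ocmp_eq E1; have H2 := ocmp_eq E2; subst; rewrite ocmp_refl; exact: IHb.
- by have H1 := ocmp_eq E1; subst; rewrite E2.
- by have H2 := ocmp_eq E2; subst; rewrite E1.
- by rewrite (IHa _ _ E1 E2).
Qed.

Lemma olt_trans x y z : olt x y -> olt y z -> olt x z.
Proof.
rewrite /olt; case E1: (ocmp x y) => //; case E2: (ocmp y z) => //.
by rewrite (ocmp_trans E1 E2).
Qed.


Lemma oeqE x y : oeq x y = (x == y).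
Proof.
rewrite /oeq; case E: ocmp.
- by rewrite (ocmp_eq E) eqxx.
- by case: eqP => // H; rewrite H ocmp_refl in E.
- by case: eqP => // H; rewrite H ocmp_refl in E.
Qed.

Definition ole x y := (x == y) || olt x y.

Lemma ole0 v : ole ozero v.
Proof. by case: v. Qed.

Lemma not_olt0 x : olt x ozero = false.
Proof. by case: x. Qed.

Lemma nolt_ole x y : ~~ olt x y -> ole y x.
Proof.
rewrite /ole /olt (ocmp_sym y x); case E: ocmp => //= _.
- by rewrite (ocmp_eq E) eqxx.
- by rewrite orbT.
Qed.

Fixpoint oapp (p t : ord) : ord :=
  match p with ozero => t | ocons a b => ocons a (oapp b t) end.

Lemma oapp0 p : oapp p ozero = p.
Proof. by elim: p => //= a _ b ->. Qed.

Lemma oappA p q r : oapp (oapp p q) r = oapp p (oapp q r).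
Proof. by elim: p => //= a _ b ->. Qed.

Lemma oapp_nz p t : p <> ozero -> oapp p t <> ozero.
Proof. by case: p. Qed.

Lemma oapp_nzr p t : t <> ozero -> oapp p t <> ozero.
Proof. by case: p. Qed.

Lemma fs_oapp p t x : t <> ozero -> fs (oapp p t) x = oapp p (fs t x).
Proof.
move=> tnz; elim: p => //= a _ b IH.
case E: (oapp b t) => [|c d]; first by by have := oapp_nzr (p:=b) tnz.
by rewrite -E IH.
Qed.

Lemma ocmp_oapp p x y : ocmp (oapp p x) (oapp p y) = ocmp x y.
Proof. by elim: p => //= a _ b ->; rewrite ocmp_refl. Qed.

Lemma last_zeroE a : last_is_zero a -> a = oapp (drop_last a) (onat 1).
Proof.
elim: a => //= e _ b IH.
case: b IH => [|c d] IH.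
  by case: e.
by move=> /IH {1}->.
Qed.

Lemma olt_succ c p : olt c (oapp p (onat 1)) -> ole c p.
Proof.
rewrite /ole /olt.
elim: p c => [|a _ b IH] [|e r] //=.
- by case: e => [|? ?] //=; case: r.
- case E: (ocmp e a) => //.
  move=> /(IH r); rewrite (ocmp_eq E).
  case/orP => [/eqP ->|]; first by rewrite eqxx.
  by move=> ->; rewrite orbT.
- by rewrite orbT.
Qed.

Lemma omega_timesS b n : omega_times b n.+1 = oapp (omega_times b n) (ocons b ozero).
Proof. by elim: n => //= n ->. Qed.

Lemma omega_times0 n : omega_times ozero n = onat n.
Proof. by elim: n => //= n ->. Qed.

Lemma lead_count_le a e : lead_count a e <= MC e.
Proof.
case: e => //= c d; case: ifP => // /[dup] H.
rewrite oeqE => /eqP <-; lia.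
Qed.

Lemma MC_ocons_r a b : MC b <= MC (ocons a b).
Proof. simpl; lia. Qed.
Lemma MC_ocons_l a b : MC a <= MC (ocons a b).
Proof. simpl; lia. Qed.

Lemma OT c n d : is_nf d ->
  (match d with ozero => true | ocons e _ => ~~ olt c e end) ->
  lead_count c d < n -> olt d (omega_times c n).
Proof.
elim: n d => [|n IH] [|e r] //= /andP[/andP[nfe nfr] hr] hce.
move/nolt_ole: hce; rewrite /ole => /orP[/eqP Hec|].
  subst e; rewrite oeqE eqxx ltnS => hl.
  have := IH r nfr hr hl; rewrite /olt /= ocmp_refl //.
by rewrite /olt /=; case: (ocmp e c).
Qed.

Lemma MC_omega_times p x : x <= MC (omega_times p x).
Proof.
case: x => [//|x] /=.
suff -> : lead_count p (omega_times p x) = x by lia.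
by elim: x => //= x ->; rewrite oeqE eqxx.
Qed.

Lemma MC_fs a x : a <> ozero -> ~~ last_is_zero a -> x <= MC (fs a x).
Proof.
elim: a => [//|e IHe b IHb] _ /=.
case: b IHb => [|c d] IHb.
  case: e IHe => [//|e1 e2] IHe _.
  case: ifP => L.
    exact: MC_omega_times.
  have := IHe (ltac:(by []) : ocons e1 e2 <> ozero) (negbT L).
  rewrite /=; lia.
move=> L; have := IHb (ltac:(by []) : ocons c d <> ozero) L; simpl; lia.
Qed.

Lemma olt_cons_l c d a b : ocmp c a = Lt -> olt (ocons c d) (ocons a b).
Proof. by rewrite /olt /= => ->. Qed.

Lemma ole_cons a d b : ole d b -> ole (ocons a d) (ocons a b).
Proof.
rewrite /ole /olt /= ocmp_refl => /orP[/eqP ->|->]; by rewrite ?eqxx ?orbT.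
Qed.

Lemma bach al : forall be x, is_nf be -> olt be al -> MC be < x -> ole be (fs al x).
Proof.
elim: al => [|a IHa b IHb] be x nfb //; first by rewrite not_olt0.
case: be nfb => [|c d] nfb; first by move=> *; apply: ole0.
move=> lt hx.
case: b IHb lt => [|b1 b2] IHb lt; last first.
  move: lt; rewrite /olt /=; case E: (ocmp c a) => // lt.
  - have ? := ocmp_eq E; subst c.
    rewrite [fs _ _]/=. apply: ole_cons; apply: IHb => //.
    + by case/andP: nfb => /andP[].
    + have := MC_ocons_r a d; lia.
  - by rewrite /ole /olt /= E orbT.
have Eca : ocmp c a = Lt.
  by move: lt; rewrite /olt /=; case: (ocmp c a) => //; case: d {nfb hx}.
clear lt; case: a IHa Eca => [|a1 a2] IHa Eca; first by case: c Eca {nfb hx}.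
rewrite [fs _ _]/=.
case: ifP => L.
  (* successor *)
  set p := drop_last (ocons a1 a2).
  have Ea : ocons a1 a2 = oapp p (onat 1) by apply: last_zeroE.
  have : olt c (oapp p (onat 1)) by rewrite -Ea /olt Eca.
  move/olt_succ; rewrite /ole => /orP[/eqP Hc|Hc].
  - subst c. case: x hx => [//|x] hx.
    rewrite /ole orbC /olt /= ocmp_refl.
    have := OT (c:=p) (n:=x) (d:=d); rewrite /olt => ->.
    + by [].
    + by case/andP: nfb => /andP[].
    + by case: d nfb {hx} => //= e r /andP[] _.
    + move: hx => /=; lia.
  - case: x hx => [|x] hx; first lia.
    by rewrite /ole orbC /olt /=; move: Hc; rewrite /olt; case: (ocmp c p).
(* limit *)
have nfc : is_nf c by case/andP: nfb => /andP[].
have hc : MC c < x by have := MC_ocons_l c d; lia.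
have := IHa c x nfc (ltac:(by rewrite /olt Eca)) hc.
rewrite /ole => /orP[/eqP Hc|Hc].
  have := MC_fs x (ltac:(by []) : ocons a1 a2 <> ozero) (negbT L).
  rewrite -Hc; lia.
by rewrite orbC /olt /=; move: Hc; rewrite /olt; case: (ocmp c _).
Qed.

Lemma pointer Y : forall al be, ole be al -> all (fun y => MC be < y) Y ->
  foldl fs al Y = ozero -> be <> ozero -> is_nf be ->
  exists m, m < size Y /\ foldl fs al (take m Y) = be.
Proof.
elim: Y => [|y Y IH] al be hle hall hz bnz nfb.
  move: hle; rewrite /= in hz; subst al; rewrite /ole not_olt0 orbF => /eqP //.
case/orP: hle => [/eqP <-|hlt]; first by exists 0.
case/andP: hall => hy hall.
have hle := bach nfb hlt hy.
have [m [hm E]] := IH _ _ hle hall hz bnz nfb.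
by exists m.+1.
Qed.

Lemma sorted_gap s a k : sorted ltn s -> a + k < size s ->
  nth 0 s a + k <= nth 0 s (a + k).
Proof.
move=> ss; elim: k => [|k IH] hk; first by rewrite !addn0.
have h1 : nth 0 s a + k <= nth 0 s (a + k) by apply: IH; rewrite addnS in hk; exact: ltnW.
have h2 : nth 0 s (a + k) < nth 0 s (a + k.+1).
  apply: (sorted_ltn_nth ltn_trans 0 ss); rewrite ?inE //; last by rewrite addnS.
  by rewrite addnS in hk; exact: ltnW.
rewrite addnS in h2 *; lia.
Qed.

Lemma foldl_split al Y m :
  foldl fs al Y = foldl fs (foldl fs al (take m Y)) (drop m Y).
Proof. by rewrite -foldl_cat cat_take_drop. Qed.

Lemma nonempty al Y : foldl fs al Y = ozero -> al <> ozero -> 0 < size Y.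
Proof. by case: Y => //= ->. Qed.

Definition Cons t (B : nat -> nat) := forall P Y y0, P <> ozero -> sorted ltn Y ->
  y0 <= nth 0 Y 0 -> foldl fs (oapp P t) Y = ozero ->
  exists m, m < size Y /\ foldl fs (oapp P t) (take m Y) = P /\ B y0 <= nth 0 Y m.

Lemma Cons_zero : Cons ozero id.
Proof.
move=> P Y y0 Pnz _ hy; rewrite oapp0 => hz.
exists 0; rewrite take0 /=; split=> //; exact: nonempty hz Pnz.
Qed.

Lemma Cons_app t1 t2 B1 B2 : Cons t1 B1 -> Cons t2 B2 -> Cons (oapp t1 t2) (B1 \o B2).
Proof.
move=> C1 C2 P Y y0 Pnz ss hy; rewrite -oappA => hz.
have [m1 [hm1 [E1 hb1]]] := C2 (oapp P t1) Y y0 (oapp_nz (t:=t1) Pnz) ss hy hz.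
have hz2 : foldl fs (oapp P t1) (drop m1 Y) = ozero by rewrite -E1 -foldl_split.
have [m2 [hm2 [E2 hb2]]] := C1 P (drop m1 Y) (B2 y0) Pnz (drop_sorted _ ss)
   (ltac:(by rewrite nth_drop addn0)) hz2.
exists (m1 + m2); split; first by rewrite size_drop in hm2; lia.
by rewrite takeD foldl_cat E1 E2 -nth_drop.
Qed.

Lemma Cons_weaken t B B' : Cons t B -> (forall y, B' y <= B y) -> Cons t B'.
Proof.
move=> C hB P Y y0 Pnz ss hy hz.
have [m [hm [E hb]]] := C P Y y0 Pnz ss hy hz.
by exists m; split=> //; split=> //; apply: leq_trans (hB _) hb.
Qed.

Lemma Cons_step e B B' : (forall y, Cons (fs (ocons e ozero) y) (B' y)) ->
  (forall y0 y, y0 <= y -> B y0 <= B' y y.+1) -> Cons (ocons e ozero) B.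
Proof.
move=> C hB P [|y Y] y0 Pnz ss hy hz; first by move: hz => /= hz; case: P Pnz hz.
move: hz; rewrite /= fs_oapp // => hz.
have hne := nonempty hz (oapp_nz Pnz).
have ssY : sorted ltn Y by move: ss => /= /path_sorted.
have hyY : y.+1 <= nth 0 Y 0.
  move: ss; clear hz ssY hy; case: Y hne => //= y1 Y _ /andP[] //.
have [m [hm [E hb]]] := C y P Y y.+1 Pnz ssY hyY hz.
exists m.+1; split=> //; split=> //=.
  by rewrite fs_oapp.
by apply: leq_trans hb; apply: hB.
Qed.

Lemma Cons_onat1 : Cons (onat 1) S.
Proof.
apply: (@Cons_step ozero S (fun y w => id w)) => [y|y0 y h] //=.
exact: Cons_zero.
Qed.

Lemma onatS n : onat n.+1 = oapp (onat 1) (onat n).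
Proof. by []. Qed.

Lemma Cons_onat n : Cons (onat n) (fun y => y + n).
Proof.
elim: n => [|n IH].
  by apply: Cons_weaken Cons_zero _ => y; rewrite addn0.
rewrite onatS; apply: Cons_weaken (Cons_app Cons_onat1 IH) _ => y /=; lia.
Qed.

Lemma Cons_w : Cons (ocons (onat 1) ozero) (fun y => y.*2).
Proof.
apply: (@Cons_step (onat 1) _ (fun y w => w + y)) => [y|y0 y h].
  have -> : fs (ocons (onat 1) ozero) y = onat y by rewrite /= omega_times0.
  exact: Cons_onat.
lia.
Qed.

Lemma Cons_wc c : Cons (omega_times (onat 1) c) (fun y => 2 ^ c * y).
Proof.
elim: c => [|c IH].
  by apply: Cons_weaken Cons_zero _ => y; rewrite mul1n.
apply: Cons_weaken (Cons_app Cons_w IH) _ => y /=; rewrite expnS -mul2n; lia.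
Qed.

Lemma Cons_w2 : Cons (ocons (onat 2) ozero) (fun y => 2 ^ y).
Proof.
apply: (@Cons_step (onat 2) _ (fun y w => 2 ^ y * w)) => [y|y0 y h].
  have -> : fs (ocons (onat 2) ozero) y = omega_times (onat 1) y by [].
  exact: Cons_wc.
have : 2 ^ y0 <= 2 ^ y by rewrite leq_exp2l.
have : 2 ^ y <= 2 ^ y * y.+1 by rewrite leq_pmulr.
lia.
Qed.

Lemma Cons_w2c c : Cons (omega_times (onat 2) c) (iter c (fun w => 2 ^ w)).
Proof.
elim: c => [|c IH]; first exact: Cons_zero.
by apply: Cons_weaken (Cons_app Cons_w2 IH) _ => y /=.
Qed.

Definition f3 e := oadd (onat 3) e.

Definition low (e : ord) := match e with ozero => true | ocons c _ => c == ozero end.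

Lemma f3_low e : low e -> f3 e = oapp (onat 3) e.
Proof. by case: e => //= c r /eqP ->. Qed.

Lemma f3_high e : ~~ low e -> f3 e = e.
Proof. by case: e => //= [[|p q]] r. Qed.

Lemma ocmp_f3 x y : ocmp (f3 x) (f3 y) = ocmp x y.
Proof.
case Lx: (low x); case Ly: (low y).
- by rewrite !f3_low // ocmp_oapp.
- rewrite f3_low // f3_high ?Ly //.
  by case: x Lx => [|[|??] ?] //; case: y Ly => [|[|??] ?].
- rewrite f3_high ?Lx // f3_low //.
  by case: x Lx => [|[|??] ?] //; case: y Ly => [|[|??] ?].
- by rewrite !f3_high ?Lx ?Ly.
Qed.

Lemma oeq_f3 x y : oeq (f3 x) (f3 y) = oeq x y.
Proof. by rewrite /oeq ocmp_f3. Qed.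
Lemma olt_f3 x y : olt (f3 x) (f3 y) = olt x y.
Proof. by rewrite /olt ocmp_f3. Qed.

Fixpoint mapE (x : ord) : ord :=
  match x with ozero => ozero | ocons a b => ocons (f3 a) (mapE b) end.

Lemma omul3 g : is_nf g -> omul oomega3 g = mapE g.
Proof.
elim: g => // a _ b IH /andP[/andP[_ nfb] hb].
change (oadd (omul_w oomega3 a) (omul oomega3 b) = ocons (f3 a) (mapE b)).
have -> : omul_w oomega3 a = ocons (f3 a) ozero by case: a {hb}.
rewrite IH //.
case: b {IH nfb} hb => //= b1 b2 hb.
by rewrite olt_f3 (negbTE hb) /=.
Qed.

Fixpoint allE (P : ord -> bool) (x : ord) : bool :=
  match x with ozero => true | ocons a b => P a && allE P b end.

Lemma oadd_app x c r : allE (fun a => ~~ olt a c) x -> oadd x (ocons c r) = oapp x (ocons c r).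
Proof. elim: x => //= a _ b IH /andP[h1 h2]; by rewrite (negbTE h1) IH. Qed.

Lemma oaddx0 x : oadd x ozero = x.
Proof. by case: x. Qed.

Lemma allE_true x : allE (fun a => ~~ olt a ozero) x.
Proof. by elim: x => //= a _ b ->; rewrite not_olt0. Qed.

Lemma oadd_onat x n : oadd x (onat n) = oapp x (onat n).
Proof.
case: n => [|n]; first by rewrite oaddx0 oapp0.
by rewrite /= oadd_app // allE_true.
Qed.

Lemma onat_add a b : oapp (onat a) (onat b) = onat (a + b).
Proof. by elim: a => //= a ->. Qed.

Lemma f3_ge3 e : ~~ olt (f3 e) (onat 3).
Proof. by have -> : onat 3 = f3 ozero by []; rewrite olt_f3 not_olt0. Qed.

Lemma allE_mapE g : allE (fun a => ~~ olt a (onat 3)) (mapE g).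
Proof. by elim: g => //= a _ b ->; rewrite f3_ge3. Qed.

Definition tailT l := ocons (onat 3) (onat (l + 2)).

Lemma PhiE l g : is_nf g -> Phi l g = oapp (mapE g) (tailT l).
Proof.
move=> nfg; rewrite /Phi omul3 // /oomega3 oadd_app ?allE_mapE //.
by rewrite !oadd_onat !oappA onat_add.
Qed.

Lemma nf_oapp x c r : is_nf x -> is_nf (ocons c r) -> allE (fun a => ~~ olt a c) x ->
  is_nf (oapp x (ocons c r)).
Proof.
elim: x => //= a _ b IH /andP[/andP[nfa nfb] hab] nfc /andP[h1 h2].
rewrite nfa IH //=.
by case: b {IH nfb h2} hab.
Qed.

Lemma nf_onat n : is_nf (onat n).
Proof. by elim: n => //= n ->; case: n. Qed.

Lemma nf_f3 e : is_nf e -> is_nf (f3 e).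
Proof.
case Le: (low e); last by rewrite f3_high ?Le.
rewrite f3_low //; case: e Le => [|c r] //= /eqP -> nfe.
by apply: (@nf_oapp (onat 3) ozero r).
Qed.

Lemma nf_mapE g : is_nf g -> is_nf (mapE g).
Proof.
elim: g => //= a _ b IH /andP[/andP[nfa nfb] hab].
rewrite nf_f3 // IH //=.
by case: b {IH nfb} hab => //= b1 b2; rewrite olt_f3.
Qed.

Lemma nf_Phi l g : is_nf g -> is_nf (Phi l g).
Proof.
move=> nfg; rewrite PhiE //; apply: nf_oapp; rewrite ?nf_mapE ?allE_mapE //.
by rewrite /= nf_onat; case: l.
Qed.

Lemma Phi_nz l g : is_nf g -> Phi l g <> ozero.
Proof. by move=> nfg; rewrite PhiE //; apply: oapp_nzr. Qed.

Lemma lc_oapp a r e : lead_count a (oapp r e) <= lead_count a r + MC e.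
Proof.
elim: r => /= [|c _ d IH]; first exact: lead_count_le.
by case: ifP => _ //; rewrite addSn ltnS.
Qed.

Lemma MC_oapp b e : MC (oapp b e) <= MC b + MC e.
Proof.
elim: b => //= a _ r IH.
have := lc_oapp a r e; lia.
Qed.

Lemma MC_onat n : MC (onat n) = n.
Proof.
elim: n => //= n ->.
suff -> : lead_count ozero (onat n) = n by rewrite /=; lia.
by elim: n => //= n ->.
Qed.

Lemma MC_f3 e : MC (f3 e) <= MC e + 3.
Proof.
case Le: (low e); last by rewrite f3_high ?Le //; lia.
rewrite f3_low //; have := MC_oapp (onat 3) e; rewrite MC_onat; lia.
Qed.

Lemma lc_mapE a b : lead_count (f3 a) (mapE b) = lead_count a b.
Proof. by elim: b => //= c _ d ->; rewrite oeq_f3. Qed.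

Lemma MC_mapE g : MC (mapE g) <= MC g + 3.
Proof.
elim: g => //= a _ b IH; rewrite lc_mapE.
have := MC_f3 a; lia.
Qed.

Lemma MC_tailT l : MC (tailT l) <= l + 5.
Proof.
rewrite /tailT /= MC_onat.
suff : lead_count (onat 3) (onat (l + 2)) = 0 by move=> ->; lia.
by rewrite addn2.
Qed.

Lemma MC_Phi l g : is_nf g -> MC (Phi l g) <= MC g + l + 8.
Proof.
move=> nfg; rewrite PhiE //.
have := MC_oapp (mapE g) (tailT l); have := MC_mapE g; have := MC_tailT l; lia.
Qed.

Lemma f3_nz e : f3 e <> ozero.
Proof. by case Le: (low e); [rewrite f3_low | rewrite f3_high ?Le //; case: e Le]. Qed.

Lemma ocmp_cons a b c d : ocmp (ocons a b) (ocons c d) =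
  match ocmp a c with Eq => ocmp b d | r => r end.
Proof. by []. Qed.

Lemma olt_Phi l g' g : olt g' g ->
  olt (oapp (mapE g') (tailT l)) (oapp (mapE g) (ocons (onat 2) ozero)).
Proof.
elim: g' g => [|a' _ b' IH] [|a b] //.
  move=> _; rewrite /olt /tailT.
  change (oapp (mapE ozero) (ocons (onat 3) (onat (l + 2)))) with (ocons (f3 ozero) (onat (l + 2))).
  change (oapp (mapE (ocons a b)) (ocons (onat 2) ozero)) with
     (ocons (f3 a) (oapp (mapE b) (ocons (onat 2) ozero))).
  rewrite ocmp_cons ocmp_f3; case: a => [|??] //.
  rewrite [ocmp ozero ozero]/=.
  case: b => [|b1 b2]; first by rewrite addn2.
  change (oapp (mapE (ocons b1 b2)) (ocons (onat 2) ozero)) with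
     (ocons (f3 b1) (oapp (mapE b2) (ocons (onat 2) ozero))).
  rewrite addn2 ocmp_cons.
  by case E: (f3 b1) => [|??] //; have := @f3_nz b1.
rewrite /olt /= ocmp_f3.
case E: (ocmp a' a) => //.
by have ? := ocmp_eq E; subst; apply: IH.
Qed.

Lemma all_drop (P : pred nat) n s : all P s -> all P (drop n s).
Proof. by rewrite -{1}(cat_take_drop n s) all_cat => /andP[]. Qed.

Lemma CF n : forall P Y, P <> ozero -> foldl fs (oapp P (onat n)) Y = ozero ->
  n < size Y /\ foldl fs (oapp P (onat n)) (take n Y) = P.
Proof.
elim: n => [|n IH] P Y Pnz hz.
  change (onat 0) with ozero in hz |- *; rewrite oapp0 in hz |- *.
  split; [exact: (nonempty hz Pnz) | by rewrite take0].
have E : oapp P (onat n.+1) = oapp (oapp P (onat n)) (onat 1) by rewrite oappA onat_add addn1.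
rewrite E in hz *.
case: Y hz => [|y Y] /= hz.
  by have := oapp_nz (t:=onat 1) (oapp_nz (t:=onat n) Pnz).
rewrite fs_oapp // [fs (onat 1) y]/= oapp0 in hz *.
by have [h1 h2] := IH P Y Pnz hz.
Qed.

Lemma reach_trans a b c Y m1 m2 : foldl fs a (take m1 Y) = b ->
  foldl fs b (take m2 (drop m1 Y)) = c -> foldl fs a (take (m1 + m2) Y) = c.
Proof. by rewrite takeD foldl_cat => ->. Qed.

Definition Etow' := Etow.

Lemma Etow_mono a b : a <= b -> Etow a <= Etow b.
Proof. by move=> h; rewrite /Etow !leq_exp2l. Qed.

Lemma lin_exp n : 4 <= n -> n + 8 < 2 ^ n.
Proof.
elim: n => [//|n IH] h.
case: (ltnP n 4) => h4.
  by have -> : n = 3 by lia.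
have := IH h4; rewrite expnS; lia.
Qed.

Lemma inflate w : w <= 2 ^ w.
Proof. exact: ltnW (ltn_expl _ (isT : 1 < 2)). Qed.

Lemma iter_ge k x : x <= iter k (fun w => 2 ^ w) x.
Proof. elim: k => //= k IH; apply: leq_trans IH (inflate _). Qed.

Lemma num z L l : 4 <= z -> L < z -> l + 4 <= z ->
  Etow L + l + 8 < iter z.-1 (fun w => 2 ^ w) z.+1.
Proof.
move=> hz hL hl.
have h1 : 2 ^ (2 ^ (2 ^ z.+1)) <= iter z.-1 (fun w => 2 ^ w) z.+1.
  have -> : z.-1 = (z.-1 - 3) + 3 by lia.
  rewrite iterD; exact: iter_ge.
have h2 : Etow L <= Etow z.-1 by apply: Etow_mono; lia.
have h3 : z <= 2 ^ (2 ^ z.-1).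
  have := ltn_expl z.-1 (isT : 1 < 2); have := ltn_expl (2 ^ z.-1) (isT : 1 < 2); lia.
have h4 : 2 ^ z <= Etow z.-1 by rewrite /Etow leq_exp2l.
have h5 := lin_exp hz.
have h6 : 2 ^ (2 ^ z.-1) < 2 ^ (2 ^ z.+1).
  by rewrite ltn_exp2l // ltn_exp2l //; lia.
have h7 : 2 * Etow z.-1 <= 2 ^ (2 ^ (2 ^ z.+1)).
  by rewrite /Etow -expnS leq_exp2l.
lia.
Qed.

Lemma all_ge_head s : sorted ltn s -> all (fun y => nth 0 s 0 <= y) s.
Proof.
case: s => //= a s /(order_path_min ltn_trans) H; rewrite leqnn /=.
by apply/allP => y /(allP H) /ltnW.
Qed.

Lemma headE (s : seq nat) : 0 < size s -> s = nth 0 s 0 :: drop 1 s.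
Proof. by case: s => //= a s _; rewrite drop0. Qed.

Lemma stepY l Y gi gn : is_nf gi -> is_nf gn -> olt gn gi -> sorted ltn Y ->
  all (fun x => 2 < x) Y -> foldl fs (Phi l gi) Y = ozero ->
  (1 < size Y -> MC gn <= Etow (nth 0 Y 1 + l)) ->
  exists m, 1 <= m /\ m < size Y /\ foldl fs (Phi l gi) (take m Y) = Phi l gn.
Proof.
move=> nfi nfn lt ss a2 hz hb.
set M := mapE gi.
set w3 := ocons (onat 3) ozero.
have PE : Phi l gi = oapp (oapp M w3) (onat (l + 2)) by rewrite PhiE // oappA.
rewrite PE in hz *.
have Anz : oapp M w3 <> ozero by apply: oapp_nzr.
have [hs1 E1] := CF Anz hz.
set Y2 := drop (l + 2) Y.
have hz2 : foldl fs (oapp M w3) Y2 = ozero by rewrite -E1 -foldl_split.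
have hY1 : 1 < size Y by lia.
have hb' := hb hY1.
set z := nth 0 Y (l + 2).
have hgap : nth 0 Y 1 + (l + 1) <= z.
  have := sorted_gap ss (a:=1) (k:=l+1) (ltac:(lia)).
  by have -> : 1 + (l + 1) = l + 2 by lia.
have h1gt : 2 < nth 0 Y 1 by apply: (allP a2); apply: mem_nth.
have Y2E : Y2 = z :: drop 1 Y2.
  have hsz : 0 < size Y2 by rewrite size_drop; lia.
  have <- : nth 0 Y2 0 = z by rewrite /Y2 nth_drop addn0.
  exact: headE.
set Y3 := drop 1 Y2.
rewrite Y2E /= in hz2.
have ss2 : sorted ltn Y2 by apply: drop_sorted.
have ss3 : sorted ltn Y3 by apply: drop_sorted.
case: z hgap Y2E hz2 => [|z'] hgap Y2E hz2; first lia.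
have Ez : fs (oapp M w3) z'.+1 = oapp (oapp M (ocons (onat 2) ozero)) (omega_times (onat 2) z').
  by rewrite fs_oapp // oappA.
rewrite Ez in hz2.
have A2nz : oapp M (ocons (onat 2) ozero) <> ozero by apply: oapp_nzr.
have hne3 := nonempty hz2 (oapp_nz A2nz).
have hy3 : z'.+2 <= nth 0 Y3 0.
  have hp : path ltn z'.+1 Y3 by move: ss2; rewrite {1}Y2E.
  exact: (allP (order_path_min ltn_trans hp)) _ (mem_nth 0 hne3).
have [m3 [hm3 [E3 hb3]]] := @Cons_w2c z' _ _ _ A2nz ss3 hy3 hz2.
set Y4 := drop m3 Y3.
have hz4 : foldl fs (oapp M (ocons (onat 2) ozero)) Y4 = ozero by rewrite -E3 -foldl_split.
have Tnz := @Phi_nz l gn nfn.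
have nfT := @nf_Phi l gn nfn.
have hMC := @MC_Phi l gn nfn.
have hall : all (fun y => MC (Phi l gn) < y) Y4.
  have := all_ge_head (drop_sorted m3 ss3); rewrite nth_drop addn0 -/Y4.
  apply: sub_all => y hy.
  have := num (z := z'.+1) (L := nth 0 Y 1 + l) (l := l) ltac:(lia) ltac:(lia) ltac:(lia).
  simpl in hb3 |- *; lia.
have hle : ole (Phi l gn) (oapp M (ocons (onat 2) ozero)).
  by rewrite /ole PhiE // olt_Phi // orbT.
have [m4 [hm4 E4]] := pointer hle hall hz4 Tnz nfT.
exists ((l + 2) + (1 + (m3 + m4))); split; first lia.
split.
  rewrite /Y4 /Y3 /Y2 !size_drop in hm4; lia.
apply: (reach_trans E1); rewrite -/Y2.
apply: (@reach_trans _ (oapp (oapp M (ocons (onat 2) ozero)) (omega_times (onat 2) z'))).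
  by rewrite Y2E /= take0 /= Ez.
apply: (reach_trans E3); exact: E4.
Qed.

Theorem lemma3p1 (l : nat) (X : seq nat) (gamma : nat -> ord) (j : nat) :
  sorted ltn X ->
  all (fun x => 2 < x) X ->
  large (Phi l (gamma 0)) X ->
  (forall i, i <= j -> is_nf (gamma i)) ->
  (forall i, i < j -> olt (gamma i.+1) (gamma i)) ->
  (forall i, i <= j -> i < size X -> MC (gamma i) <= Etow (nth 0 X i + l)) ->
  j < size X.
Proof.
move=> ss a2 /eqP lg nf dec bnd.
have Inv : forall i, i <= j -> exists m, i <= m /\
    foldl fs (Phi l (gamma 0)) (take m X) = Phi l (gamma i).
  elim=> [|i IH] hi; first by exists 0; rewrite take0.
  have [m [him Em]] := IH (ltnW hi).
  have hz : foldl fs (Phi l (gamma i)) (drop m X) = ozero by rewrite -Em -foldl_split.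
  have hb : 1 < size (drop m X) -> MC (gamma i.+1) <= Etow (nth 0 (drop m X) 1 + l).
    rewrite size_drop => hs.
    apply: leq_trans (bnd _ hi ltac:(lia)) _; apply: Etow_mono.
    rewrite nth_drop leq_add2r.
    have := sorted_gap ss (a:=i.+1) (k:=m - i) ltac:(lia).
    have -> : i.+1 + (m - i) = m + 1 by lia.
    lia.
  have [m' [h1 [h2 E']]] := stepY (nf i (ltnW hi)) (nf _ hi) (dec _ hi)
     (drop_sorted _ ss) (all_drop _ a2) hz hb.
  exists (m + m'); split; first lia.
  exact: reach_trans Em E'.
have [m [hjm Em]] := Inv j (leqnn _).
case: (ltnP m (size X)) => hm; first lia.
move: Em; rewrite take_oversize // lg => /esym.
by move=> H; exfalso; exact: (@Phi_nz l (gamma j) (nf _ (leqnn _)) H).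
Qed.
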